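(* Let $\phi$ be an instance of MonLinNAE3SAT, and let $\mathcal{G}$ be the lifetime-1 temporal graph constructed from $\phi$, with sources $s$ and $s'$. If $\mathcal{G}$ admits a solution of \textsc{ReachFast} with sources $\{s,s'\}$ of value at most $6$, then $\phi$ has a not-all-equal satisfying assignment.
   Context: MonLinNAE3SAT instance: a CNF formula $\phi$ on variables $x_1,\dots,x_n$ with clauses $c_1,\dots,c_m$. Every clause has exactly three distinct literals, every variable appears exactly four times, there are no negations, and any two clauses share at most one variable. A not-all-equal satisfying assignment makes, in every clause, at least one literal true and at least one literal false. Construction of $\mathcal{G}$. All edges have the single label $1$. The vertices and edges are as follows. - Sources $s,s'$. - For each clause $c_j$: vertices $a_j,a'_j,z_j,z'_j$ and edges $sa_j$, $s'a'_j$, $a_jz_j$, $a'_jz'_j$. - For each variable $x_i$: vertices $b_i,b'_i,w_i$ and edges $b_iw_i$, $w_ib'_i$. - If $x_i$ appears in $c_j$: edges $a_jb_i$ and $a'_jb'_i$. - If $x_i$ and $x_k$ appear in a common clause: edges $b_ib_k$, $b'_ib'_k$, $w_iw_k$. - A ladder on vertices $p_1,\dots,p_5,q_1,\dots,q_5$ with edges $sp_1$, $sq_1$, $s'p_5$, $s'q_5$, $p_ip_{i+1}$ and $q_iq_{i+1}$ for $i\in[4]$, and $p_iq_i$ for $i\in[5]$. Temporal graph notions. A temporal graph has edge sets $E_1,\dots,E_{t_{\max}}$, and an edge has label $i$ if it lies in $E_i$. A temporal path uses edges with strictly increasing labels; its arrival time is its last label. $\mathrm{reachtime}(v,\cdot)$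 is the least $t$ such that $v$ reaches every vertex by time $t$. Delaying a label $i$ by a positive integer $\delta$ replaces it by $i+\delta$. A solution for sources $S$ is a temporal graph obtained by delaying labels in which every source reaches every vertex; its value is $\max_{v\in S}\mathrm{reachtime}(v,\cdot)$. *)

(* Defs.v *)
From mathcomp Require Import all_boot all_order.
Set Implicit Arguments. Unset Strict Implicit. Unset Printing Implicit Defensive.

(* An instance with n variables x_0..x_{n-1} and m clauses c_0..c_{m-1};
   [cl j p] is the variable occupying position p (of 3) in clause j.
   No negations: every literal is a positive variable. *)
Definition occurs (n m : nat) (cl : 'I_m -> 'I_3 -> 'I_n) (i : 'I_n) (j : 'I_m) : bool :=
  [exists p : 'I_3, cl j p == i].

Definition MonLinNAE3SAT (n m : nat) (cl : 'I_m -> 'I_3 -> 'I_n) : Prop :=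
  (forall j : 'I_m, injective (cl j)) /\
  (forall i : 'I_n, #|[set jp : 'I_m * 'I_3 | cl jp.1 jp.2 == i]| = 4) /\
  (forall j j' : 'I_m, j != j' ->
     #|[set i : 'I_n | occurs cl i j && occurs cl i j']| <= 1).

Definition NAE_sat (n m : nat) (cl : 'I_m -> 'I_3 -> 'I_n) (a : 'I_n -> bool) : Prop :=
  forall j : 'I_m, (exists p : 'I_3, a (cl j p)) /\ (exists p : 'I_3, ~~ a (cl j p)).

(* Ladder vertices p_1..p_5, q_1..q_5 are vp k, vq k with k : 'I_5 (k = index-1). *)
Inductive vert (n m : nat) : Type :=
| vs | vs'
| va of 'I_m | va' of 'I_m | vz of 'I_m | vz' of 'I_m
| vb of 'I_n | vb' of 'I_n | vw of 'I_n
| vp of 'I_5 | vq of 'I_5.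
Arguments vs {n m}. Arguments vs' {n m}.
Arguments va {n m}. Arguments va' {n m}. Arguments vz {n m}. Arguments vz' {n m}.
Arguments vb {n m}. Arguments vb' {n m}. Arguments vw {n m}. Arguments vp {n m}. Arguments vq {n m}.

Definition cooccur (n m : nat) (cl : 'I_m -> 'I_3 -> 'I_n) (i k : 'I_n) : Prop :=
  i <> k /\ exists j : 'I_m, occurs cl i j /\ occurs cl k j.

Inductive base_edge (n m : nat) (cl : 'I_m -> 'I_3 -> 'I_n) : vert n m -> vert n m -> Prop :=
| e_sa j : base_edge cl vs (va j)
| e_sa' j : base_edge cl vs' (va' j)
| e_az j : base_edge cl (va j) (vz j)
| e_az' j : base_edge cl (va' j) (vz' j)
| e_bw i : base_edge cl (vb i) (vw i)
| e_wb' i : base_edge cl (vw i) (vb' i)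
| e_ab j i : occurs cl i j -> base_edge cl (va j) (vb i)
| e_ab' j i : occurs cl i j -> base_edge cl (va' j) (vb' i)
| e_bb i k : cooccur cl i k -> base_edge cl (vb i) (vb k)
| e_bb' i k : cooccur cl i k -> base_edge cl (vb' i) (vb' k)
| e_ww i k : cooccur cl i k -> base_edge cl (vw i) (vw k)
| e_sp k : nat_of_ord k = 0 -> base_edge cl vs (vp k)
| e_sq k : nat_of_ord k = 0 -> base_edge cl vs (vq k)
| e_s'p k : nat_of_ord k = 4 -> base_edge cl vs' (vp k)
| e_s'q k : nat_of_ord k = 4 -> base_edge cl vs' (vq k)
| e_pp k k' : (nat_of_ord k).+1 = nat_of_ord k' -> base_edge cl (vp k) (vp k')
| e_qq k k' : (nat_of_ord k).+1 = nat_of_ord k' -> base_edge cl (vq k) (vq k')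
| e_pq k k' : nat_of_ord k = nat_of_ord k' -> base_edge cl (vp k) (vq k').

Definition gedge (n m : nat) (cl : 'I_m -> 'I_3 -> 'I_n) (u v : vert n m) : Prop :=
  base_edge cl u v \/ base_edge cl v u.

(* It is obtained from G (all labels 1) by delaying: each edge keeps a single
   label, which is 1 or 1 + delta with delta a positive integer. *)
Definition delayed_labelling (n m : nat) (cl : 'I_m -> 'I_3 -> 'I_n)
  (lam : vert n m -> vert n m -> nat) : Prop :=
  forall u v, gedge cl u v -> lam u v = lam v u /\ 1 <= lam u v.

Inductive tpath (n m : nat) (cl : 'I_m -> 'I_3 -> 'I_n) (lam : vert n m -> vert n m -> nat)
  : vert n m -> vert n m -> nat -> Prop :=
| tp_one x y : gedge cl x y -> tpath cl lam x y (lam x y)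
| tp_step x y z t : tpath cl lam x y t -> gedge cl y z -> t < lam y z ->
                    tpath cl lam x z (lam y z).

Definition reaches_by (n m : nat) (cl : 'I_m -> 'I_3 -> 'I_n) (lam : vert n m -> vert n m -> nat)
  (x y : vert n m) (t : nat) : Prop :=
  x = y \/ exists t', tpath cl lam x y t' /\ t' <= t.

Definition reachtime_le (n m : nat) (cl : 'I_m -> 'I_3 -> 'I_n) (lam : vert n m -> vert n m -> nat)
  (x : vert n m) (t : nat) : Prop :=
  forall y : vert n m, reaches_by cl lam x y t.

Definition reachfast_solution_le (n m : nat) (cl : 'I_m -> 'I_3 -> 'I_n)
  (lam : vert n m -> vert n m -> nat) (t : nat) : Prop :=
  delayed_labelling cl lam /\ reachtime_le cl lam vs t /\ reachtime_le cl lam vs' t.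

(* Main.v *)
Require Import Defs.
From mathcomp Require Import all_boot all_order.
From mathcomp Require Import zify.

Section S.
Variables (n m : nat) (cl : 'I_m -> 'I_3 -> 'I_n).

Definition fs' (v : vert n m) : nat :=
  match v with
  | vs => 6 | vs' => 0 | va _ => 5 | va' _ => 1 | vz _ => 6 | vz' _ => 2
  | vb _ => 4 | vb' _ => 2 | vw _ => 3 | vp k => 5 - k | vq k => 5 - k end.

Definition fs (v : vert n m) : nat :=
  match v with
  | vs => 0 | vs' => 6 | va _ => 1 | va' _ => 5 | vz _ => 2 | vz' _ => 6
  | vb _ => 2 | vb' _ => 4 | vw _ => 3 | vp k => k.+1 | vq k => k.+1 end.

Lemma base_lip (u v : vert n m) : base_edge cl u v ->
  fs' u <= (fs' v).+1 /\ fs' v <= (fs' u).+1 /\ fs u <= (fs v).+1 /\ fs v <= (fs u).+1.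
Proof.
case=> //=; try (move=> k k' H; lia); try (move=> k H; lia).
Qed.

Lemma lip (u v : vert n m) : gedge cl u v ->
  fs' v <= (fs' u).+1 /\ fs v <= (fs u).+1.
Proof. by case=> /base_lip; lia. Qed.

Lemma tpath_bound lam : delayed_labelling cl lam -> forall x y t,
  tpath cl lam x y t -> (fs' y <= fs' x + t) /\ (fs y <= fs x + t) /\ 1 <= t.
Proof.
move=> Hd x y t; elim=> [x0 y0 He | x0 y0 z t0 _ IH He Hlt].
  have [_ H1] := Hd _ _ He; have := lip _ _ He; lia.
have := lip _ _ He; lia.
Qed.

Lemma tpath_inv lam x z t : tpath cl lam x z t ->
  (gedge cl x z /\ t = lam x z) \/
  exists y t1, [/\ tpath cl lam x y t1, gedge cl y z, t1 < lam y z & t = lam y z].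
Proof.
case=> [x0 y0 He | x0 y0 z0 t0 Hp He Hlt]; first by left.
by right; exists y0, t0.
Qed.

Lemma nb_z y j : gedge cl y (vz j) -> y = va j.
Proof. by case=> H; inversion H. Qed.
Lemma nb_z' y j : gedge cl y (vz' j) -> y = va' j.
Proof. by case=> H; inversion H. Qed.
Lemma nb_a y j : gedge cl y (va j) -> fs' y <= 4 -> exists i, y = vb i /\ occurs cl i j.
Proof. by case=> H; inversion H; subst => //= _; eexists; split. Qed.
Lemma nb_a' y j : gedge cl y (va' j) -> fs y <= 4 -> exists i, y = vb' i /\ occurs cl i j.
Proof. by case=> H; inversion H; subst => //= _; eexists; split. Qed.
Lemma nb_b y i : gedge cl y (vb i) -> fs' y <= 3 -> y = vw i.
Proof. by case=> H; inversion H; subst. Qed.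
Lemma nb_b' y i : gedge cl y (vb' i) -> fs y <= 3 -> y = vw i.
Proof. by case=> H; inversion H; subst. Qed.
Lemma nb_w y i : gedge cl y (vw i) -> fs y <= 2 -> y = vb i.
Proof. by case=> H; inversion H; subst. Qed.
End S.
Arguments lip {n m cl u v}. Arguments base_lip {n m cl u v}. Arguments tpath_bound {n m cl lam}. Arguments tpath_inv {n m cl lam x z t}. Arguments nb_z {n m cl y j}. Arguments nb_z' {n m cl y j}. Arguments nb_a {n m cl y j}. Arguments nb_a' {n m cl y j}. Arguments nb_b {n m cl y i}. Arguments nb_b' {n m cl y i}. Arguments nb_w {n m cl y i}.

Theorem lemma2 (n m : nat) (cl : 'I_m -> 'I_3 -> 'I_n) :
  MonLinNAE3SAT cl ->
  (exists lam : vert n m -> vert n m -> nat, reachfast_solution_le cl lam 6) ->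
  exists a : 'I_n -> bool, NAE_sat cl a.
Proof.
move=> _ [lam [Hd [Hs Hs']]].
exists (fun i => lam (vb i) (vw i) == 4) => j; split.
- have [//|[t [Hp Ht]]] := Hs' (vz j).
  have [[He _]|[y [t1 [Hp1 He1 Hl1 E1]]]] := tpath_inv Hp.
    by have := lip He; rewrite /=; lia.
  have ? := nb_z He1; subst y.
  have := tpath_bound Hd _ _ _ Hp1; rewrite /= => B1.
  have [[He _]|[y [t2 [Hp2 He2 Hl2 E2]]]] := tpath_inv Hp1.
    by have := lip He; rewrite /=; lia.
  have := tpath_bound Hd _ _ _ Hp2 => B2.
  have [i [? Oi]] := nb_a He2 ltac:(simpl in *; lia); subst y.
  simpl in B2.
  have [[He _]|[y [t3 [Hp3 He3 Hl3 E3]]]] := tpath_inv Hp2.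
    by have := lip He; rewrite /=; lia.
  have := tpath_bound Hd _ _ _ Hp3 => B3.
  have ? := nb_b He3 ltac:(simpl in *; lia); subst y.
  simpl in B3.
  move: Oi => /existsP [p /eqP Hp0]; exists p; rewrite Hp0.
  have [Hsym _] := Hd _ _ He3. rewrite -Hsym. apply/eqP. lia.
- have [//|[t [Hp Ht]]] := Hs (vz' j).
  have [[He _]|[y [t1 [Hp1 He1 Hl1 E1]]]] := tpath_inv Hp.
    by have := lip He; rewrite /=; lia.
  have ? := nb_z' He1; subst y.
  have := tpath_bound Hd _ _ _ Hp1; rewrite /= => B1.
  have [[He _]|[y [t2 [Hp2 He2 Hl2 E2]]]] := tpath_inv Hp1.
    by have := lip He; rewrite /=; lia.
  have := tpath_bound Hd _ _ _ Hp2 => B2.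
  have [i [? Oi]] := nb_a' He2 ltac:(simpl in *; lia); subst y.
  simpl in B2.
  have [[He _]|[y [t3 [Hp3 He3 Hl3 E3]]]] := tpath_inv Hp2.
    by have := lip He; rewrite /=; lia.
  have := tpath_bound Hd _ _ _ Hp3 => B3.
  have ? := nb_b' He3 ltac:(simpl in *; lia); subst y.
  simpl in B3.
  have [[He _]|[y [t4 [Hp4 He4 Hl4 E4]]]] := tpath_inv Hp3.
    by have := lip He; rewrite /=; lia.
  have := tpath_bound Hd _ _ _ Hp4 => B4.
  have ? := nb_w He4 ltac:(simpl in *; lia); subst y.
  simpl in B4.
  move: Oi => /existsP [p /eqP Hp0]; exists p; rewrite Hp0.
  apply/eqP. lia.
Qed.
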